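(* Let $G$ be a finite abelian group with $N = |G|$, let $A \subseteq G$, let $\Gamma$ be a finite set of characters of $G$, let $\delta > 0$, write $\psi = \psi_{\Gamma,\delta}$, and let $\rho > 0$. Then the number of $x \in A$ for which $(A \ast \psi)(x) \leq \rho$ is at most $\rho N$.
   Context: Sets are identified with indicator functions; $f \ast g(x) = \sum_y f(y)g(x-y)$; arguments of complex numbers lie in $(-\pi,\pi]$. For $\Gamma = \{\gamma_1,\dots,\gamma_d\}$ let $\|x\|_\Gamma = \max_j|\arg\gamma_j(x)|/(2\pi)$ ($\|x\|_\emptyset = 0$), $B_{\Gamma,t} = \{x : \|x\|_\Gamma \leq t\}$, $\widetilde{B}_{\Gamma,\delta}(x) = \int_0^\infty B_{\Gamma,t}(x)\delta^{-1}e^{-t/\delta}\,dt$, $\beta_{\Gamma,\delta} = \widetilde{B}_{\Gamma,\delta}/\sum_y \widetilde{B}_{\Gamma,\delta}(y)$, and $\psi_{\Gamma,\delta} = \beta_{\Gamma,\delta}\ast\beta_{\Gamma,\delta}$. *)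

(* Defs.v *)
From HB Require Import structures.
From mathcomp Require Import all_boot all_order all_algebra.
From mathcomp Require Import complex.
From mathcomp Require Import all_classical all_reals all_analysis.
Set Implicit Arguments. Unset Strict Implicit. Unset Printing Implicit Defensive.
Import Order.TTheory GRing.Theory Num.Theory.
Local Open Scope ring_scope.
Local Open Scope classical_set_scope.

Section Defs.
Variable R : realType.

(* Argument of a complex number, with values in (-pi, pi]. *)
Definition carg (z : R[i]) : R :=
  let a := complex.Re z in let b := complex.Im z in
  let r := Num.sqrt (a ^+ 2 + b ^+ 2) in
  if 0 <= b then acos (a / r) else - acos (a / r).

Variable G : finZmodType.

Definition is_character (g : G -> R[i]) : Prop :=
  (forall x y : G, g (x + y) = g x * g y) /\ (forall x : G, g x != 0).

Definition gnorm (Gam : seq (G -> R[i])) (x : G) : R :=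
  \big[Num.max/0]_(g <- Gam) (`|carg (g x)| / (2 * pi)).

Definition bohr (Gam : seq (G -> R[i])) (t : R) (x : G) : R :=
  if gnorm Gam x <= t then 1 else 0.

Definition bohr_smooth (Gam : seq (G -> R[i])) (delta : R) (x : G) : R :=
  fine (\int[lebesgue_measure]_(t in `[0%R, +oo[%classic)
          (bohr Gam t x * delta^-1 * expR (- (t / delta)))%:E)%E.

Definition beta_ (Gam : seq (G -> R[i])) (delta : R) (x : G) : R :=
  bohr_smooth Gam delta x / \sum_(y : G) bohr_smooth Gam delta y.

Definition gconv (f g : G -> R) (x : G) : R := \sum_(y : G) f y * g (x - y).

Definition psi_ (Gam : seq (G -> R[i])) (delta : R) : G -> R :=
  gconv (beta_ Gam delta) (beta_ Gam delta).

Definition ind (A : {set G}) (x : G) : R := if x \in A then 1 else 0.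

End Defs.

(* Main.v *)
Require Import Defs.
From HB Require Import structures.
From mathcomp Require Import all_boot all_order all_algebra.
From mathcomp Require Import complex.
From mathcomp Require Import all_classical all_reals all_analysis.
From mathcomp Require Import ring lra.
Import Order.TTheory GRing.Theory Num.Theory.
Local Open Scope ring_scope.
From mathcomp Require Import exponential_distribution.
Local Open Scope classical_set_scope.
Lemma carg1 (R : realType) : carg (1 : R[i]) = 0.
Proof.
rewrite /carg /= expr0n /= addr0 expr1n sqrtr1 divr1 lexx.
exact: acos1.
Qed.

Lemma carg_inv (R : realType) (z : R[i]) : `|carg z^-1| = `|carg z|.
Proof.
case: z => a b.
rewrite /carg /=.
set n := a ^+ 2 + b ^+ 2.
have n0 : 0 <= n by rewrite /n addr_ge0 // sqr_ge0.
have [n00|nz] := eqVneq n 0.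
  move/eqP: (n00); rewrite /n paddr_eq0 ?sqr_ge0 // !sqrf_eq0 => /andP[/eqP a0 /eqP b0].
  by rewrite a0 b0 !mul0r oppr0.
have np : 0 < n by rewrite lt0r nz.
have ki : 0 < n^-1 by rewrite invr_gt0.
have e : Num.sqrt ((a / n) ^+ 2 + (- (b / n)) ^+ 2) = n^-1 * Num.sqrt n.
  rewrite sqrrN !expr_div_n -mulrDl sqrtrM ?addr_ge0 ?sqr_ge0 //.
  by rewrite sqrtrV ?exprn_ge0 // sqrtr_sqr ger0_norm // mulrC.
rewrite e.
have -> : a / n / (n^-1 * Num.sqrt n) = a / Num.sqrt n.
  by rewrite invfM invrK mulrA divfK.
have -> : (0 <= - (b / n)) = (b <= 0).
  by apply/idP/idP; rewrite oppr_ge0 pmulr_lle0.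
have [b0|b0|b0] := ltrgt0P b.
  by rewrite normrN.
  by rewrite normrN.
by [].
Qed.
Lemma smooth_one (R : realType) (G : finZmodType) (Gam : seq (G -> R[i])) (delta : R) (x : G) :
  0 < delta -> Defs.gnorm Gam x <= 0 -> bohr_smooth Gam delta x = 1.
Proof.
move=> d0 gx.
rewrite /bohr_smooth integral_mkcond.
rewrite (_ : _ \_ _ = fun t => (exponential_pdf delta^-1 t)%:E).
  by rewrite integral_exponential_pdf ?invr_gt0.
apply/funext => t; rewrite /exponential_pdf !patchE.
case: ifP => // ht.
move: ht; rewrite inE /= in_itv /= andbT => ht.
rewrite /bohr (le_trans gx ht) mul1r; congr (_%:E); congr (_ * expR _).
by rewrite mulNr mulrC.
Qed.
Section Comb.
Variables (R : realType) (G : finZmodType).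

Lemma sum_shift (F : G -> R) y : \sum_u F (u + y) = \sum_u F u.
Proof. by rewrite [RHS](reindex_inj (addIr y)). Qed.

Lemma sum_shiftN (F : G -> R) y : \sum_u F (u - y) = \sum_u F u.
Proof. exact: sum_shift. Qed.

Variables (b : G -> R).
Hypothesis b_ge0 : forall x, 0 <= b x.
Hypothesis b_sum : \sum_x b x = 1.
Hypothesis b_sym : forall x, b (- x) = b x.

Lemma conv_ge0 (f g : G -> R) : (forall x, 0 <= f x) -> (forall x, 0 <= g x) ->
  forall x, 0 <= gconv f g x.
Proof. by move=> hf hg x; apply: sumr_ge0 => y _; apply: mulr_ge0. Qed.

Lemma ind_ge0 (A : {set G}) x : 0 <= ind R A x.
Proof. by rewrite /ind; case: ifP. Qed.

Lemma key_identity (S : {set G}) :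
  \sum_x ind R S x * gconv (ind R S) (gconv b b) x =
  \sum_u (gconv (ind R S) b u) ^+ 2.
Proof.
set s := ind R S.
have inner : forall y w, \sum_u b (u - y) * b (u - w) = gconv b b (w - y).
  move=> y w; rewrite -(sum_shift _ y) /gconv; apply: eq_bigr => v _.
  rewrite addrK; congr (_ * _); rewrite -b_sym; congr b.
  by rewrite opprB opprD addrA addrAC.
transitivity (\sum_w \sum_y s y * s w * \sum_u b (u - y) * b (u - w)).
  apply: eq_bigr => w _; rewrite {1}/gconv mulr_sumr; apply: eq_bigr => y _.
  by rewrite inner mulrA [s w * _]mulrC.
transitivity (\sum_w \sum_y \sum_u s y * b (u - y) * (s w * b (u - w))).
  apply: eq_bigr => w _; apply: eq_bigr => y _; rewrite mulr_sumr.
  by apply: eq_bigr => u _; rewrite mulrACA.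
rewrite exchange_big /=.
transitivity (\sum_y \sum_u \sum_w s y * b (u - y) * (s w * b (u - w))).
  by apply: eq_bigr => y _; rewrite exchange_big.
rewrite exchange_big /=; apply: eq_bigr => u _.
by rewrite expr2 /gconv mulr_suml; apply: eq_bigr => y _; rewrite mulr_sumr.
Qed.

Lemma conv_sum (S : {set G}) : \sum_u gconv (ind R S) b u = #|S|%:R.
Proof.
rewrite /gconv exchange_big /=.
transitivity (\sum_y ind R S y).
  by apply: eq_bigr => y _; rewrite -mulr_sumr sum_shiftN b_sum mulr1.
by rewrite /ind -big_mkcond /= sumr_const.
Qed.

Lemma cs (h : G -> R) : (\sum_u h u) ^+ 2 <= #|G|%:R * \sum_u h u ^+ 2.
Proof.
set N : R := #|G|%:R; set k := \sum_u h u.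
have N0 : 0 < N.
  by rewrite ltr0n; apply/card_gt0P; exists 0.
have : 0 <= \sum_u (N * h u - k) ^+ 2 by apply: sumr_ge0 => u _; apply: sqr_ge0.
have -> : \sum_u (N * h u - k) ^+ 2 =
   N ^+ 2 * \sum_u h u ^+ 2 - (2 * N * k) * k + N * k ^+ 2.
  transitivity (\sum_u (N ^+ 2 * h u ^+ 2 - (2 * N * k) * h u + k ^+ 2)).
    by apply: eq_bigr => u _; rewrite sqrrB exprMn; congr (_ - _ + _); rewrite mulr2n mulrDl !mul1r; ring.
  rewrite big_split big_split /= sumrN -!mulr_sumr sumr_const.
  rewrite (_ : #|_| = #|G|); last by apply: eq_card.
  by rewrite -/k -mulr_natr -/N; ring.
move=> h0.
have : 0 <= N * (N * \sum_u h u ^+ 2 - k ^+ 2).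
  by move: h0; congr (0 <= _); ring.
rewrite pmulr_rge0 // subr_ge0 //.
Qed.

Lemma bound (A : {set G}) rho : 0 < rho ->
  #|[set x in A | gconv (ind R A) (gconv b b) x <= rho]|%:R <= rho * #|G|%:R.
Proof.
move=> r0.
set S := [set x in A | _].
set F := gconv (ind R A) (gconv b b).
have psi0 : forall x, 0 <= gconv b b x by apply: conv_ge0.
have h1 : \sum_x ind R S x * F x <= rho * #|S|%:R.
  rewrite (eq_bigr (fun x => if x \in S then F x else 0)); last first.
    by move=> x _; rewrite /ind; case: ifP; rewrite ?mul1r ?mul0r.
  rewrite -big_mkcond /=.
  apply: le_trans (_ : \sum_(x in S) rho <= _).
    by apply: ler_sum => x; rewrite inE => /andP[].
  by rewrite sumr_const mulr_natr.
have h2 : \sum_x ind R S x * gconv (ind R S) (gconv b b) x <= \sum_x ind R S x * F x.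
  apply: ler_sum => x _; apply: ler_wpM2l; first exact: ind_ge0.
  apply: ler_sum => y _; apply: ler_wpM2r => //.
  rewrite /ind; case: (boolP (y \in S)) => hy.
    by move: hy; rewrite inE => /andP[-> _].
  by case: ifP.
have h3 := cs (gconv (ind R S) b).
rewrite conv_sum -key_identity in h3.
have N0 : 0 <= #|G|%:R :> R by [].
have k0 : 0 <= #|S|%:R :> R by [].
move: h1 h2 h3; set k : R := #|S|%:R; set N : R := #|G|%:R; set X := \sum_x _.
set Y := \sum_x _ => h1 h2 h3.
have h4 : k ^+ 2 <= N * (rho * k).
  apply: le_trans h3 _; apply: ler_wpM2l => //; exact: le_trans h2 h1.
have [->|kp] := eqVneq k 0; first by rewrite mulr_ge0 // ltW.
have kp' : 0 < k by rewrite lt0r kp.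
rewrite expr2 mulrA [N * rho]mulrC in h4.
by rewrite -(ler_pM2r kp').
Qed.

End Comb.

Section Chars.
Variables (R : realType) (G : finZmodType).

Lemma char0 {g : G -> R[i]} : is_character g -> g 0 = 1.
Proof.
move=> [hm hn]; have := hm 0 0; rewrite addr0 => e.
by apply: (mulfI (hn 0)); rewrite mulr1 -e.
Qed.

Lemma charN {g : G -> R[i]} x : is_character g -> g (- x) = (g x)^-1.
Proof.
move=> hg; have := char0 hg; case: hg => hm hn.
rewrite -(subrr x) hm => e.
by rewrite -[g (- x)](mulKf (hn x)) e mulr1.
Qed.

Lemma gnorm0 (Gam : seq (G -> R[i])) : (forall g, g \in Gam -> is_character g) ->
  Defs.gnorm Gam (0 : G) <= 0.
Proof.
elim: Gam => [|g l IH] hG; first by rewrite /Defs.gnorm big_nil.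
rewrite /Defs.gnorm big_cons ge_max; apply/andP; split.
  rewrite char0; last by apply: hG; rewrite mem_head.
  rewrite (_ : carg 1 = 0) ?normr0 ?mul0r //; exact: carg1.
by apply: IH => h hh; apply: hG; rewrite in_cons hh orbT.
Qed.

Lemma gnormN (Gam : seq (G -> R[i])) x : (forall g, g \in Gam -> is_character g) ->
  Defs.gnorm Gam (- x) = Defs.gnorm Gam x.
Proof.
move=> hG; rewrite /Defs.gnorm; apply: eq_big_seq => g hg.
rewrite charN; last exact: hG.
congr (_ / _); exact: carg_inv.
Qed.

Lemma smooth_ge0 (Gam : seq (G -> R[i])) delta x : 0 < delta ->
  0 <= bohr_smooth Gam delta x.
Proof.
move=> d0; rewrite /bohr_smooth; apply: fine_ge0; apply: integral_ge0 => t _.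
rewrite lee_fin; apply: mulr_ge0; last exact: expR_ge0.
apply: mulr_ge0; last by rewrite invr_ge0 ltW.
by rewrite /bohr; case: ifP.
Qed.

Lemma smoothN (Gam : seq (G -> R[i])) delta x :
  (forall g, g \in Gam -> is_character g) ->
  bohr_smooth Gam delta (- x) = bohr_smooth Gam delta x.
Proof. by move=> hG; rewrite /bohr_smooth /bohr (@gnormN Gam x hG). Qed.

End Chars.

Theorem lemma7p2 (R : realType) (G : finZmodType) (A : {set G})
  (Gam : seq (G -> R[i])) (delta rho : R) :
  (forall g, g \in Gam -> is_character g) ->
  0 < delta -> 0 < rho ->
  (#|[set x in A | gconv (ind R A) (psi_ Gam delta) x <= rho]|%:R
     <= rho * #|G|%:R :> R).
Proof.
move=> hG d0 r0.
set D := \sum_(y : G) bohr_smooth Gam delta y.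
have D1 : 1 <= D.
  rewrite /D (bigD1 0) //= smooth_one ?gnorm0 // lerDl.
  by apply: sumr_ge0 => y _; apply: smooth_ge0.
have Dp : 0 < D by apply: lt_le_trans D1; exact: ltr01.
have h1 : forall x, 0 <= beta_ Gam delta x.
  move=> x; rewrite /beta_; apply: divr_ge0; [exact: smooth_ge0| exact: ltW].
have h2 : \sum_x beta_ Gam delta x = 1.
  by rewrite /beta_ -mulr_suml; apply: divff; rewrite gt_eqF.
have h3 : forall x, beta_ Gam delta (- x) = beta_ Gam delta x.
  by move=> x; rewrite /beta_ (@smoothN R G Gam delta x hG).
exact: (@bound R G (beta_ Gam delta) h1 h2 h3 A rho r0).
Qed.
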